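(* If $G$ is a forest without isolated vertices, then $str(G)=|V(G)|+1$.
   Context: For a graph $G$ of order $p$, a numbering of $G$ is a bijection $f:V(G)\to[1,p]$. The strength of a numbering $f$ is $str_f(G)=\max\{f(u)+f(v): uv\in E(G)\}$, and the strength of a graph $G$ with at least one edge is $str(G)=\min\{str_f(G): f \text{ a numbering of } G\}$. *)

(* Defs.v *)
From mathcomp Require Import all_boot.
Set Implicit Arguments. Unset Strict Implicit. Unset Printing Implicit Defensive.

Definition simple_graph (T : finType) (e : rel T) :=
  symmetric e /\ irreflexive e.

Definition is_cycle (T : finType) (e : rel T) (x : T) (p : seq T) : bool :=
  [&& 2 <= size p, uniq (x :: p), path e x p & e (last x p) x].

Definition forest (T : finType) (e : rel T) :=
  forall x p, ~~ is_cycle e x p.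

Definition no_isolated (T : finType) (e : rel T) :=
  forall v : T, exists u, e v u.

(* A numbering is a bijection V -> [1, p]; encoded as an injective
   f : T -> 'I_#|T|, vertex v receiving label f v + 1. *)
Definition numbering (T : finType) (f : {ffun T -> 'I_#|T|}) : bool :=
  injectiveb f.

Definition lab (T : finType) (f : {ffun T -> 'I_#|T|}) (v : T) : nat := (f v).+1.

Definition strength_of (T : finType) (e : rel T) (f : {ffun T -> 'I_#|T|}) : nat :=
  \max_(uv : T * T | e uv.1 uv.2) (lab f uv.1 + lab f uv.2).

(* str(G) = min over numberings f of str_f(G); the default value 2*|V|
   is never attained when G has an edge (every str_f <= 2|V| - 1). *)
Definition strength (T : finType) (e : rel T) : nat :=
  \big[minn/(2 * #|T|)]_(f : {ffun T -> 'I_#|T|} | numbering f) strength_of e f.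

(* Main.v *)
Require Import Defs.
From mathcomp Require Import all_boot.
From mathcomp Require Import zify.
Set Implicit Arguments. Unset Strict Implicit.

Lemma bigmin_le (I : finType) (P : pred I) (F : I -> nat) x i0 :
  P i0 -> \big[minn/x]_(i | P i) F i <= F i0.
Proof.
move=> hP; have : i0 \in index_enum I by rewrite mem_index_enum.
rewrite unlock; elim: (index_enum I) => //= j s IH; rewrite inE => /orP [/eqP <-|/IH h].
  by rewrite hP geq_minl.
case: (P j) => //; exact: leq_trans (geq_minr _ _) h.
Qed.

Section Aux.
Variables (T : finType) (e : rel T).
Hypothesis (sg : simple_graph e) (fo : forest e).

Definition leafP (S : {set T}) :=
  exists w u, [/\ w \in S, u \in S, e w u & forall y, y \in S -> e w y -> y = u].

Lemma leaf_step (S : {set T}) x y p :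
  uniq (x :: y :: p) -> path e x (y :: p) -> all (mem S) (x :: y :: p) ->
  (forall t, t \notin x :: y :: p -> t \in S -> e x t -> leafP S) -> leafP S.
Proof.
have [esym eirr] := sg.
move=> hu hp hall K.
move: (hall) => /= /and3P [hxS hyS hall'].
case: (boolP [exists t, [&& t \in S, e x t & t != y]]) => [/existsP [t /and3P [htS hxt hty]]|hno].
  case: (boolP (t \in x :: y :: p)) => htin; last by apply: (K t).
  exfalso; move: htin; rewrite inE => /orP [/eqP htx| htp].
    by move: hxt; rewrite htx eirr.
  have [p1 [p2 eq]] : exists p1 p2, y :: p = p1 ++ t :: p2.
    by case/splitPr: htp => p1 p2; exists p1, p2.
  rewrite eq in hu hp.
  have: ~~ is_cycle e x (rcons p1 t) by apply: fo.
  rewrite /is_cycle last_rcons size_rcons (esym t x) hxt andbT.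
  have -> : uniq (x :: rcons p1 t).
    by move: hu; rewrite -cat_rcons -cat_cons cat_uniq => /andP [].
  have -> : path e x (rcons p1 t).
    by move: hp; rewrite -cat_rcons cat_path => /andP [].
  case: p1 eq {hu hp} => [|a p1] /=; first by case=> h; move: hty; rewrite h eqxx.
  by [].
exists x, y; split => //; first by case/andP: hp.
by move=> z hz hxz; apply/eqP; apply: contraNT hno => hzy; apply/existsP; exists z; rewrite hz hxz hzy.
Qed.

Lemma leaf_walk (S : {set T}) n : forall p x,
  #|T| - size p <= n -> uniq (x :: p) -> path e x p -> p != [::] ->
  all (mem S) (x :: p) -> leafP S.
Proof.
have [esym eirr] := sg.
elim: n => [|n IH] [|y p] x hn hu hp hne hall //;
  apply: (leaf_step hu hp hall) => t htin htS hxt.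
- exfalso.
  have hc : #|t :: x :: y :: p| = size (t :: x :: y :: p).
    by apply/card_uniqP; rewrite /= htin; move: hu => /= ->.
  have := max_card (mem (t :: x :: y :: p)); rewrite hc /=.
  move: hn => /=; lia.
- have hu2 : uniq (t :: x :: y :: p) by rewrite cons_uniq htin hu.
  apply: (IH (x :: y :: p) t _ hu2) => //=.
  + move: hn => /=; lia.
  + by rewrite (esym t x) hxt; move: hp => /= ->.
  + by rewrite htS; move: hall => /= ->.
Qed.

Lemma leaf_ex (S : {set T}) a b : a \in S -> b \in S -> e a b ->
  exists w u, [/\ w \in S, u \in S, e w u & forall y, y \in S -> e w y -> y = u].
Proof.
have [esym eirr] := sg.
move=> ha hb hab.
apply: (@leaf_walk S #|T| [:: b] a) => //=.
- lia.
- rewrite inE andbT; apply/eqP => hba; by move: hab; rewrite hba eirr.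
- by rewrite hab.
- by rewrite ha hb.
Qed.

Lemma lab_ex n : forall S : {set T}, #|S| <= n ->
  exists g : T -> nat, [/\ {in S &, injective g},
    (forall x, x \in S -> g x < #|S|) &
    (forall x y, x \in S -> y \in S -> e x y -> g x + g y < #|S|)].
Proof.
have [esym eirr] := sg.
elim: n => [|n IH] S hS.
  exists (fun _ => 0); split.
  - move=> x y hx _ _; exfalso; have : 0 < #|S| by apply/card_gt0P; exists x.
    lia.
  - move=> x hx; exfalso; have : 0 < #|S| by apply/card_gt0P; exists x.
    lia.
  - move=> x y hx _ _; exfalso; have : 0 < #|S| by apply/card_gt0P; exists x.
    lia.
case: (boolP [exists a, exists b, [&& a \in S, b \in S & e a b]]) => [hE|hE].
  move/existsP: hE => [a /existsP [b /and3P [ha hb hab]]].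
  have [w [u [hw hu hwu hleaf]]] := leaf_ex ha hb hab.
  have hneq : u != w by apply/eqP => h; move: hwu; rewrite h eirr.
  set S' := S :\ w :\ u.
  have hu' : u \in S :\ w by rewrite in_setD1 hneq hu.
  have hc : #|S| = #|S'|.+2.
    by rewrite (cardsD1 w S) hw (cardsD1 u (S :\ w)) hu'.
  have [g' [g'i g'b g'e]] := IH S' ltac:(lia).
  clear IH hS; move: hc g'b g'e; move: #|S'| => m hc g'b g'e; move: hc; move: #|S| => N hc.
  have inS' : forall x, x \in S -> x != u -> x != w -> x \in S'.
    by move=> x hx h1 h2; rewrite !in_setD1 h1 h2 hx.
  pose G := fun x => if x == u then 0 else if x == w then N.-1 else (g' x).+1.
  have uS' : u \notin S' by rewrite !in_setD1 eqxx.
  have wS' : w \notin S' by rewrite !in_setD1 eqxx andbF.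
  have cls : forall z, z \in S -> [\/ z = u /\ G z = 0, z = w /\ G z = N.-1 |
                             [/\ z \in S', G z = (g' z).+1 & g' z < m]].
    move=> z hz; rewrite /G.
    case: (eqVneq z u) => [->|hzu]; first by constructor 1.
    case: (eqVneq z w) => [->|hzw]; first by constructor 2.
    by constructor 3; split => //; [apply: inS'|apply: g'b; apply: inS'].
  exists G; split.
  - move=> x y hx hy.
    case: (cls x hx) => [[-> ->]|[-> ->]|[hx' -> bx]];
    case: (cls y hy) => [[-> ->]|[-> ->]|[hy' -> by']] h.
    + done.
    + exfalso; clear -h hc; lia.
    + exfalso; clear -h; lia.
    + exfalso; clear -h hc; lia.
    + done.
    + exfalso; clear -h hc by'; lia.
    + exfalso; clear -h; lia.
    + exfalso; clear -h hc bx; lia.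
    + by move: h => [] /g'i; apply.
  - move=> x hx.
    case: (cls x hx) => [[_ ->]|[_ ->]|[_ -> bx]]; [clear -hc; lia|clear -hc; lia|clear -hc bx; lia].
  - move=> x y hx hy hxy.
    case: (cls x hx) => [[ex ->]|[ex ->]|[hx' -> bx]].
    + case: (cls y hy) => [[_ ->]|[_ ->]|[_ -> bb]]; [clear -hc; lia|clear -hc; lia|clear -hc bb; lia].
    + have ey : y = u by apply: hleaf; rewrite // -ex.
      case: (cls y hy) => [[_ ->]|[ey' _]|[hy' _ _]]; first by clear -hc; lia.
      * by move: hneq; rewrite -ey ey' eqxx.
      * by move: uS'; rewrite -ey hy'.
    + case: (cls y hy) => [[_ ->]|[ey _]|[hy' -> bb]]; first by clear -hc bx; lia.
      * have ex : x = u by apply: hleaf; rewrite // -ey esym.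
        by move: uS'; rewrite -ex hx'.
      * have := g'e x y hx' hy' hxy; clear -hc; lia.
exists (fun x => index x (enum S)); split.
- move=> x y hx hy h; have hx2 : x \in enum S by rewrite mem_enum.
  have hy2 : y \in enum S by rewrite mem_enum.
  exact: (index_inj x hx2 hy2 h).
- by move=> x hx; rewrite cardE index_mem mem_enum.
- move=> x y hx hy hxy; exfalso; move/negP: hE; apply; apply/existsP; exists x;
  apply/existsP; exists y; by rewrite hx hy hxy.
Qed.

End Aux.

Theorem mainTheorem3 (T : finType) (e : rel T) :
  0 < #|T| -> simple_graph e -> forest e -> no_isolated e ->
  strength e = #|T|.+1.
Proof.
move=> hT sg fo ni.
have [esym eirr] := sg.
apply/eqP; rewrite eqn_leq; apply/andP; split.
- have [g [gi gb ge]] := lab_ex sg fo (leqnn #|[set: T]|).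
  have gb' : forall x, g x < #|T| by move=> x; rewrite -cardsT gb // inE.
  pose f := [ffun x => Ordinal (gb' x)] : {ffun T -> 'I_#|T|}.
  have hf : numbering f.
    apply/injectiveP => x y; rewrite !ffunE => [[]] /gi; apply; by rewrite inE.
  rewrite /strength; apply: leq_trans (bigmin_le _ _ hf) _.
  apply/bigmax_leqP => [[x y]] /= hxy.
  rewrite /lab !ffunE /=.
  have := ge x y (in_setT x) (in_setT y) hxy; rewrite cardsT addSn addnS ltnS; exact.
- rewrite /strength; apply: (big_ind (fun m => #|T|.+1 <= m)).
  + lia.
  + by move=> a b ha hb; rewrite leq_min ha hb.
  move=> f /injectiveP hf.
  have hm : #|T|.-1 < #|T| by lia.
  have hcard : #|'I_(#|T|)| <= #|T| by rewrite card_ord.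
  have /codomP [v hv] := inj_card_onto hf hcard (Ordinal hm).
  have [u hvu] := ni v.
  apply: leq_trans (leq_bigmax_cond (F := fun uv : T * T => lab f uv.1 + lab f uv.2) (P := fun uv : T * T => e uv.1 uv.2) (v, u) hvu).
  rewrite /lab /= -hv /=; lia.
Qed.
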